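(* Let $G$ be a connected graph, let $L$ be a list-assignment with $|L(u)|\ge\deg(u)+1$ for all $u\in V(G)$, and let $\alpha$ be an $L$-colouring. Fix $v,w\in V(G)$, let $d:=\mathrm{dist}(v,w)$, and let $P$ be a shortest $v,w$-path. If $v$ is unfrozen under $\alpha$, then there exists a recolouring sequence $\mathcal{S}$ from $\alpha$ to some $L$-colouring $\gamma$ such that (i) $w$ is unfrozen under $\gamma$, (ii) every vertex recoloured during $\mathcal{S}$ belongs to $V(P)\setminus\{w\}$, and (iii) $|\mathcal{S}|\le d$. Moreover, if $|L(v)|\ge\deg(v)+2$, then $v$ is also unfrozen under $\gamma$.
   Context: An $L$-colouring is a proper colouring $\varphi$ with $\varphi(v)\in L(v)$ for all $v$. A recolouring sequence is a sequence of single-vertex recolouring steps, each changing the colour of one vertex to another colour of its list so that the colouring remains proper; $|\mathcal{S}|$ is its number of steps. A vertex $u$ is frozen under $\varphi$ if every colour of $L(u)\setminus\{\varphi(u)\}$ appears on a neighbour of $u$, and unfrozen otherwise. *)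

(* Defs.v *)
From mathcomp Require Import all_boot.
Set Implicit Arguments. Unset Strict Implicit. Unset Printing Implicit Defensive.

Definition simple_graph (T : finType) (e : rel T) : Prop :=
  symmetric e /\ irreflexive e.

Definition connected_graph (T : finType) (e : rel T) : Prop :=
  forall x y : T, connect e x y.

Definition nbhd (T : finType) (e : rel T) (u : T) : {set T} := [set x | e u x].
Definition deg (T : finType) (e : rel T) (u : T) : nat := #|nbhd e u|.

Definition L_colouring (T C : finType) (e : rel T) (L : T -> {set C})
    (phi : {ffun T -> C}) : Prop :=
  (forall u, phi u \in L u) /\ (forall u x, e u x -> phi u != phi x).

Definition frozen (T C : finType) (e : rel T) (L : T -> {set C})
    (phi : {ffun T -> C}) (u : T) : Prop :=
  forall c, c \in L u -> c != phi u -> exists2 x, e u x & phi x = c.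

Definition unfrozen (T C : finType) (e : rel T) (L : T -> {set C})
    (phi : {ffun T -> C}) (u : T) : Prop := ~ frozen e L phi u.

Definition recol_step (T C : finType) (phi psi : {ffun T -> C}) : Prop :=
  exists x, phi x != psi x /\ forall y, y != x -> phi y = psi y.

(* A recolouring sequence from alpha: the list s of successive colourings
   after each step; every intermediate colouring is an L-colouring; |S| = size s. *)
Fixpoint recol_seq (T C : finType) (e : rel T) (L : T -> {set C})
    (phi : {ffun T -> C}) (s : seq {ffun T -> C}) : Prop :=
  match s with
  | [::] => True
  | psi :: s' => recol_step phi psi /\ L_colouring e L psi /\ recol_seq e L psi s'
  end.

Fixpoint recoloured_in (T C : finType) (phi : {ffun T -> C})
    (s : seq {ffun T -> C}) (x : T) : Prop :=
  match s with
  | [::] => False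
  | psi :: s' => phi x != psi x \/ recoloured_in psi s' x
  end.

(* P (as the list of vertices after v) is a v,w-path of minimal length;
   its length is size P = dist(v,w). *)
Definition shortest_path (T : finType) (e : rel T) (v w : T) (P : seq T) : Prop :=
  [/\ path e v P, last v P = w &
      forall Q : seq T, path e v Q -> last v Q = w -> size P <= size Q].

(* Main.v *)
From Stdlib Require Import Classical.
Require Import Defs.
From mathcomp Require Import all_boot.
From mathcomp Require Import zify.
Set Implicit Arguments. Unset Strict Implicit. Unset Printing Implicit Defensive.

Section Aux.
Variables (T C : finType) (e : rel T) (L : T -> {set C}).

Lemma short_belast (v w : T) (P : seq T) : path e v P -> w \in belast v P ->
  exists Q, [/\ path e v Q, last v Q = w & size Q < size P].
Proof.
elim: P v => [|x P IH] v //=.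
move=> /andP[evx pP]; rewrite in_cons => /orP[/eqP->|wb].
  by exists [::].
have [Q [pQ lQ sQ]] := IH x pP wb.
by exists (x :: Q); split => //=; rewrite evx.
Qed.

Lemma frozen_sub (phi : {ffun T -> C}) x : frozen e L phi x ->
  (L x :\ phi x) \subset phi @: nbhd e x.
Proof.
move=> fr; apply/subsetP => c; rewrite in_setD1 => /andP[cne cL].
have [y ey <-] := fr c cL cne.
by apply: imset_f; rewrite inE.
Qed.

Hypothesis hL : forall u, deg e u + 1 <= #|L u|.

Lemma frozen_eq (phi : {ffun T -> C}) x : phi x \in L x -> frozen e L phi x ->
  phi @: nbhd e x = L x :\ phi x /\ #|phi @: nbhd e x| = #|nbhd e x|.
Proof.
move=> inL fr.
have sub := frozen_sub fr.
have c1 : #|L x| = 1 + #|L x :\ phi x| by rewrite (cardsD1 (phi x)) inL.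
have c2 := leq_imset_card phi (nbhd e x).
have h := hL x; rewrite /deg in h.
have c3 : #|L x :\ phi x| <= #|phi @: nbhd e x| by apply: subset_leq_card.
have eq1 : L x :\ phi x = phi @: nbhd e x.
  apply/eqP; rewrite eqEcard sub /=.
  apply: leq_trans c2 _; rewrite -(leq_add2l 1) -c1 addnC //.
split; first by [].
apply/eqP; rewrite eqn_leq c2 /=.
by rewrite -eq1 -(leq_add2l 1) -c1 addnC.
Qed.

Lemma unfrozen_big (phi : {ffun T -> C}) x : phi x \in L x ->
  deg e x + 2 <= #|L x| -> unfrozen e L phi x.
Proof.
move=> inL h fr.
have sub := frozen_sub fr.
have c1 : #|L x| = 1 + #|L x :\ phi x| by rewrite (cardsD1 (phi x)) inL.
have c2 := leq_imset_card phi (nbhd e x).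
have c3 := subset_leq_card sub.
rewrite /deg in h. move: h; rewrite c1.
have := leq_trans c3 c2. lia.
Qed.

Hypothesis sg : simple_graph e.

Lemma step_lemma (alpha : {ffun T -> C}) u x :
  L_colouring e L alpha -> unfrozen e L alpha u -> e u x -> frozen e L alpha x ->
  exists beta : {ffun T -> C}, [/\ L_colouring e L beta, recol_step alpha beta,
     unfrozen e L beta x & forall y, alpha y != beta y -> y = u].
Proof.
move=> [inL prop] unf eux frx.
have [sym irr] := sg.
have [c [cL cne cfree]] : exists c, [/\ c \in L u, c != alpha u &
   forall y, e u y -> alpha y != c].
  apply: NNPP => H; apply: unf => c cL cne; apply: NNPP => H2; apply: H.
  exists c; split => // y ey; apply/negP => /eqP ay; apply: H2; by exists y.
set beta := [ffun y => if y == u then c else alpha y].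
have bu : beta u = c by rewrite ffunE eqxx.
have bo : forall y, y != u -> beta y = alpha y by move=> y /negbTE h; rewrite ffunE h.
have xu : x != u by apply/eqP => exu; rewrite exu irr in eux.
exists beta; split.
- split.
    by move=> y; case: (eqVneq y u) => [->|h]; rewrite ?bu ?bo.
  move=> a b eab.
  case: (eqVneq a u) => [ea|ha]; case: (eqVneq b u) => [eb|hb].
  + by rewrite ea eb irr in eab.
  + by rewrite ea bu (bo _ hb) eq_sym cfree // -ea.
  + by rewrite eb bu (bo _ ha) cfree // sym -eb.
  + by rewrite (bo _ ha) (bo _ hb) prop.
- exists u; split; first by rewrite bu eq_sym.
  by move=> y hy; rewrite bo.
- move=> frb.
  have [e1 i1] := frozen_eq (inL x) frx.
  have bxL : beta x \in L x by rewrite bo.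
  have [e2 _] := frozen_eq bxL frb.
  have ux : u \in nbhd e x by rewrite inE sym.
  have : alpha u \in beta @: nbhd e x.
    by rewrite e2 (bo _ xu) -e1; apply: imset_f.
  case/imsetP => y yN ay.
  case: (eqVneq y u) => [yu|yu].
    by rewrite yu bu in ay; move: cne; rewrite ay eqxx.
  move: i1 => /eqP /imset_injP inj.
  have := inj u y ux yN; rewrite ay bo // => /(_ erefl) h.
  by rewrite h eqxx in yu.
- move=> y; case: (eqVneq y u) => // h; by rewrite bo ?eqxx.
Qed.

Lemma recol_last (alpha : {ffun T -> C}) s : L_colouring e L alpha ->
  recol_seq e L alpha s -> L_colouring e L (last alpha s).
Proof.
elim: s alpha => [|b s IH] alpha //= _ [_ [Lb rs]]; exact: IH.
Qed.

Lemma walk (Q : seq T) : forall (u : T) (alpha : {ffun T -> C}),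
  L_colouring e L alpha -> unfrozen e L alpha u -> path e u Q ->
  last u Q \notin belast u Q ->
  exists s, [/\ recol_seq e L alpha s, unfrozen e L (last alpha s) (last u Q),
    (forall x, recoloured_in alpha s x -> x \in belast u Q) & size s <= size Q].
Proof.
elim: Q => [|x Q IH] u alpha Lc unf.
  by move=> _ _; exists [::].
rewrite /= => /andP[eux pQ]; rewrite in_cons negb_or => /andP[_ nb].
case: (classic (frozen e L alpha x)) => frx.
- have [beta [Lb st unb only]] := step_lemma Lc unf eux frx.
  have [s [rs us rc ss]] := IH x beta Lb unb pQ nb.
  exists (beta :: s); split => //=.
  move=> y [h|h]; first by rewrite (only _ h) mem_head.
  by rewrite in_cons (rc _ h) orbT.
- have [s [rs us rc ss]] := IH x alpha Lc frx pQ nb.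
  exists s; split => //; last by apply: leqW.
  by move=> y h; rewrite in_cons (rc _ h) orbT.
Qed.

End Aux.

Theorem mainTheorem5 (T C : finType) (e : rel T) (L : T -> {set C})
    (alpha : {ffun T -> C}) (v w : T) (P : seq T) :
  simple_graph e -> connected_graph e ->
  (forall u, deg e u + 1 <= #|L u|) ->
  L_colouring e L alpha ->
  shortest_path e v w P ->
  unfrozen e L alpha v ->
  exists (s : seq {ffun T -> C}),
    let gamma := last alpha s in
    [/\ recol_seq e L alpha s,
        unfrozen e L gamma w,
        (forall x, recoloured_in alpha s x -> x \in v :: P /\ x != w),
        size s <= size P &
        (deg e v + 2 <= #|L v| -> unfrozen e L gamma v)].
Proof.
move=> sg _ hL Lc [pP lP minP] unf.
have nb : w \notin belast v P.
  apply/negP => /(short_belast pP) [Q [pQ lQ sQ]].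
  by have := minP Q pQ lQ; rewrite leqNgt sQ.
have nb' : last v P \notin belast v P by rewrite lP.
have [s [rs us rc ss]] := walk hL sg Lc unf pP nb'.
exists s; split => //.
- by rewrite -lP.
- move=> x h; have hx := rc _ h; split; first exact: mem_belast hx.
  by apply/eqP => ex; subst x; rewrite hx in nb.
- move=> h; have [inL _] := recol_last Lc rs.
  exact: unfrozen_big.
Qed.
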